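(* Assume $h$ satisfies Assumption 1. If $B^s\ge B^d+1$, then $\hat B^d=B^d$ and $\hat\epsilon(x,i)=0$ for all $i\in\{0,1\}$ and $x=0,1,\dots,B^s$.
   Context: Parameters: $\lambda>0$, $0<\mu_l<\mu_h$, $\delta=\mu_h-\mu_l$, $\Lambda=\lambda+\mu_h$, $R\ge 0$, $c>0$, discount rate $\beta>0$ with the normalization $\Lambda+\beta=1$, and $h:\{0,1,2,\dots\}\to\mathbb{R}$ nondecreasing and convex with $h(0)=0$. Assumption 1: (1) there is $\theta>1$ with $h(x+1)\le\theta h(x)$ for all $x>0$; (2) there exist $\gamma\in[0,1)$ and a positive integer $J$ with $\left(\frac{\Lambda}{\Lambda+\beta}\right)^J[R+c+h(x+J)]\le\gamma[R+c+h(x)]$ for all $x\ge0$. Combined problem finite-horizon values on $S=\{0,1,\dots\}\times\{0,1\}$: $v_0\equiv0$, $v_{n+1}(0,0)=\lambda v_n(0,1)+\mu_h v_n(0,0)$; $v_{n+1}(x,0)=-h(x)+\lambda v_n(x,1)+\mu_l v_n(x-1,0)+\max\{\delta v_n(x,0),-c+\delta v_n(x-1,0)\}$ for $x\ge1$; $v_{n+1}(x,1)=\max\{R+v_{n+1}(x+1,0),v_{n+1}(x,0)\}$. Admission-control subproblem: $\hat v$ defined identically except that the max in the $(x,0)$ equation is replaced by $\delta\hat v_n(x,0)$ (service rate always $\mu_l$). Infinite-horizon values: $v=\lim_n v_n$ and $\hat v=\lim_n\hat v_n$ (pointwise limits, which exist under Assumption 1); they are the optimal infinite-horizon discounted profits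 of the combined problem and of the admission control subproblem. $\hat\epsilon(x,i)=v(x,i)-\hat v(x,i)$ (value of service flexibility). With $\Delta(x,0)=v(x,0)-v(x+1,0)$, $\hat\Delta(x,0)=\hat v(x,0)-\hat v(x+1,0)$ and $T_f(\theta)=\sup\{k\ge0:f(k)\le\theta\}$ ($\sup\emptyset=-1$, $+\infty$ allowed), the stationary optimal thresholds are $B^s=1+T_{\Delta(\cdot,0)}(c/\delta)$ (high rate used in states $x>B^s$, low rate otherwise), $B^d=T_{\Delta(\cdot,0)}(R)$ (admit iff $x\le B^d$) for the combined problem, and $\hat B^d=T_{\hat\Delta(\cdot,0)}(R)$ for the subproblem. *)

(* Defs.v *)
From Stdlib Require Import Reals Lra ZArith.
Open Scope R_scope.

(* States (x,i): x : nat, i : bool with false = 0, true = 1. *)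

(* One step of value iteration for the combined problem.
   lam, mul, muh are lambda, mu_l, mu_h; rw is the reward R; c the cost. *)
Definition step_comb (lam mul muh rw c : R) (h : nat -> R)
  (v : nat -> bool -> R) : nat -> bool -> R :=
  let delta := muh - mul in
  let w0 := fun x : nat => match x with
    | O => lam * v O true + muh * v O false
    | S y => - h x + lam * v x true + mul * v y false
             + Rmax (delta * v x false) (- c + delta * v y false)
    end in
  fun x i => if i then Rmax (rw + w0 (S x)) (w0 x) else w0 x.

(* Admission-control subproblem: service rate always mu_l. *)
Definition step_adm (lam mul muh rw : R) (h : nat -> R)
  (v : nat -> bool -> R) : nat -> bool -> R :=
  let delta := muh - mul in
  let w0 := fun x : nat => match x with
    | O => lam * v O true + muh * v O false
    | S y => - h x + lam * v x true + mul * v y false + delta * v x false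
    end in
  fun x i => if i then Rmax (rw + w0 (S x)) (w0 x) else w0 x.

Definition vn (lam mul muh rw c : R) (h : nat -> R) (n : nat) : nat -> bool -> R :=
  Nat.iter n (step_comb lam mul muh rw c h) (fun _ _ => 0).

Definition vhatn (lam mul muh rw : R) (h : nat -> R) (n : nat) : nat -> bool -> R :=
  Nat.iter n (step_adm lam mul muh rw h) (fun _ _ => 0).

Inductive ext : Type := Fin (z : Z) | PInf.

Definition ext_le (a b : ext) : Prop :=
  match a, b with
  | _, PInf => True
  | PInf, Fin _ => False
  | Fin x, Fin y => (x <= y)%Z
  end.

Definition ext_add1 (a : ext) : ext :=
  match a with Fin z => Fin (z + 1) | PInf => PInf end.

(* T_f(theta) = sup {k >= 0 : f k <= theta}, with sup of the empty set = -1
   and +∞ allowed: [is_T f theta t] says t is this supremum (least upper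
   bound in Z ∪ {+∞} of the set, taken together with the convention -1). *)
Definition is_T (f : nat -> R) (theta : R) (t : ext) : Prop :=
  ext_le (Fin (-1)) t /\
  (forall k : nat, f k <= theta -> ext_le (Fin (Z.of_nat k)) t) /\
  (forall u : ext, ext_le (Fin (-1)) u ->
     (forall k : nat, f k <= theta -> ext_le (Fin (Z.of_nat k)) u) ->
     ext_le t u).

(* Main.v *)
Require Import Defs.
From Stdlib Require Import Reals Lra Lia ZArith.
Open Scope R_scope.

Lemma cv_const (a : R) : Un_cv (fun _ => a) a.
Proof. intros e He. exists 0%nat. intros n _. unfold R_dist. rewrite Rminus_diag, Rabs_R0. lra. Qed.

Lemma cv_scal (a : R) u l : Un_cv u l -> Un_cv (fun n => a * u n) (a * l).
Proof. intro H. apply (CV_mult (fun _ => a) u); [apply cv_const|exact H]. Qed.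

Lemma cv_max u w lu lw : Un_cv u lu -> Un_cv w lw ->
  Un_cv (fun n => Rmax (u n) (w n)) (Rmax lu lw).
Proof.
  intros Hu Hw e He. destruct (Hu e He) as [N1 H1]. destruct (Hw e He) as [N2 H2].
  exists (Nat.max N1 N2). intros n Hn.
  assert (A := H1 n ltac:(lia)). assert (B := H2 n ltac:(lia)).
  unfold R_dist in *. apply Rabs_def2 in A. apply Rabs_def2 in B.
  apply Rabs_def1; unfold Rmax; repeat destruct Rle_dec; lra.
Qed.

Lemma cv_succ u l : Un_cv u l -> Un_cv (fun n => u (S n)) l.
Proof.
  intros H e He. destruct (H e He) as [N HN]. exists N. intros n Hn. apply HN. lia.
Qed.

Lemma lim_le (a b : nat -> R) la lb : (forall n, a n <= b n) -> Un_cv a la -> Un_cv b lb -> la <= lb.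
Proof. intros. eapply Rle_cv_lim; eauto. Qed.

Lemma mul_le (a x y : R) : 0 <= a -> x <= y -> a * x <= a * y.
Proof. intros. apply Rmult_le_compat_l; auto. Qed.

(* concavity with convention g(-1) = g(0) *)
Definition conc (g : nat -> R) : Prop :=
  0 <= g 0%nat - g 1%nat /\ forall x, g x - g (S x) <= g (S x) - g (S (S x)).

Lemma conc_ext f g : (forall x, f x = g x) -> conc f -> conc g.
Proof. intros E [H1 H2]. split; [rewrite <- !E; auto|intro x; rewrite <- !E; auto]. Qed.

Lemma conc_nonneg g : conc g -> forall x, 0 <= g x - g (S x).
Proof. intros [H0 H] x. induction x; auto. specialize (H x). lra. Qed.

Lemma conc_plus f g : conc f -> conc g -> conc (fun x => f x + g x).
Proof. intros [A B] [C D]. split; [lra| intro x; specialize (B x); specialize (D x); lra]. Qed.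

Lemma conc_scal a g : 0 <= a -> conc g -> conc (fun x => a * g x).
Proof.
  intros Ha [A B]. split.
  - replace (a * g 0%nat - a * g 1%nat) with (a * (g 0%nat - g 1%nat)) by ring.
    apply Rmult_le_pos; auto.
  - intro x. specialize (B x).
    replace (a * g x - a * g (S x)) with (a * (g x - g (S x))) by ring.
    replace (a * g (S x) - a * g (S (S x))) with (a * (g (S x) - g (S (S x)))) by ring.
    apply mul_le; auto.
Qed.

Lemma conc_pred g : conc g -> conc (fun x => g (pred x)).
Proof.
  intros [A B]. split; simpl. lra. intros [|x]; simpl. lra. apply B.
Qed.

Lemma conc_A rw g : conc g -> conc (fun x => Rmax (rw + g (S x)) (g x)).
Proof.
  intros Hc. pose proof (conc_nonneg g Hc) as N. destruct Hc as [A B]. split.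
  - specialize (N 0%nat). specialize (B 0%nat). unfold Rmax; repeat destruct Rle_dec; lra.
  - intro x. pose proof (B x). pose proof (B (S x)). pose proof (N x).
    unfold Rmax; repeat destruct Rle_dec; lra.
Qed.

Lemma conc_S c g : 0 < c -> conc g -> conc (fun x => Rmax (g x) (- c + g (pred x))).
Proof.
  intros Hc0 Hc. pose proof (conc_nonneg g Hc) as N. destruct Hc as [A B]. split; simpl.
  - unfold Rmax; repeat destruct Rle_dec; lra.
  - intros [|x]; simpl.
    + pose proof (B 0%nat). unfold Rmax; repeat destruct Rle_dec; lra.
    + pose proof (B x). pose proof (B (S x)). pose proof (N x).
      unfold Rmax; repeat destruct Rle_dec; lra.
Qed.

Lemma step_comb_false lam mul muh rw c h v x :
  0 < c -> h 0%nat = 0 ->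
  step_comb lam mul muh rw c h v x false =
  - h x + lam * v x true + mul * v (pred x) false
  + Rmax ((muh - mul) * v x false) (- c + (muh - mul) * v (pred x) false).
Proof.
  intros Hc Hh. destruct x; simpl; [|reflexivity].
  rewrite Rmax_left by lra. rewrite Hh. ring.
Qed.

Lemma step_comb_true lam mul muh rw c h v x :
  step_comb lam mul muh rw c h v x true =
  Rmax (rw + step_comb lam mul muh rw c h v (S x) false) (step_comb lam mul muh rw c h v x false).
Proof. reflexivity. Qed.

Lemma step_adm_false lam mul muh rw h v x :
  h 0%nat = 0 ->
  step_adm lam mul muh rw h v x false =
  - h x + lam * v x true + mul * v (pred x) false + (muh - mul) * v x false.
Proof.
  intros Hh. destruct x; simpl; [|reflexivity]. rewrite Hh. ring.
Qed.

Lemma step_adm_true lam mul muh rw h v x :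
  step_adm lam mul muh rw h v x true =
  Rmax (rw + step_adm lam mul muh rw h v (S x) false) (step_adm lam mul muh rw h v x false).
Proof. reflexivity. Qed.

Lemma conc_const a : conc (fun _ => a).
Proof. split; intros; lra. Qed.

Lemma conc_negh (h : nat -> R) : h 0%nat = 0 -> (forall x, h x <= h (S x)) ->
  (forall x, h (S x) - h x <= h (S (S x)) - h (S x)) -> conc (fun x => - h x).
Proof. intros H0 Hm Hc. split. pose proof (Hm 0%nat). lra. intro x. pose proof (Hc x). lra. Qed.

Lemma conc_vn lam mul muh rw c h n :
  0 < c -> 0 <= lam -> 0 <= mul -> mul < muh -> h 0%nat = 0 -> (forall x, h x <= h (S x)) ->
  (forall x, h (S x) - h x <= h (S (S x)) - h (S x)) ->
  conc (fun x => vn lam mul muh rw c h n x false) /\ conc (fun x => vn lam mul muh rw c h n x true).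
Proof.
  intros Hc Hl Hm Hmm H0 Hmo Hcv. induction n as [|n [IH1 IH2]].
  - split; apply conc_const.
  - assert (C : conc (fun x => vn lam mul muh rw c h (S n) x false)).
    { eapply conc_ext. intro x. symmetry. apply step_comb_false; auto.
      apply conc_plus; [apply conc_plus; [apply conc_plus|]|].
      - apply conc_negh; auto.
      - apply conc_scal; auto.
      - apply conc_scal; auto. apply (conc_pred (fun x => vn lam mul muh rw c h n x false)); auto.
      - apply (conc_S c (fun x => (muh - mul) * vn lam mul muh rw c h n x false)); auto.
        apply conc_scal; auto. lra. }
    split; auto.
    apply (conc_ext (fun x => Rmax (rw + vn lam mul muh rw c h (S n) (S x) false) (vn lam mul muh rw c h (S n) x false))).
    intro x; reflexivity. exact (conc_A rw _ C).
Qed.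

Lemma conc_vhatn lam mul muh rw h n :
  0 <= lam -> 0 <= mul -> mul < muh -> h 0%nat = 0 -> (forall x, h x <= h (S x)) ->
  (forall x, h (S x) - h x <= h (S (S x)) - h (S x)) ->
  conc (fun x => vhatn lam mul muh rw h n x false) /\ conc (fun x => vhatn lam mul muh rw h n x true).
Proof.
  intros Hl Hm Hmm H0 Hmo Hcv. induction n as [|n [IH1 IH2]].
  - split; apply conc_const.
  - assert (C : conc (fun x => vhatn lam mul muh rw h (S n) x false)).
    { eapply conc_ext. intro x. symmetry. apply step_adm_false; auto.
      apply conc_plus; [apply conc_plus; [apply conc_plus|]|].
      - apply conc_negh; auto.
      - apply conc_scal; auto.
      - apply conc_scal; auto. apply (conc_pred (fun x => vhatn lam mul muh rw h n x false)); auto.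
      - apply conc_scal; auto. lra. }
    split; auto.
    apply (conc_ext (fun x => Rmax (rw + vhatn lam mul muh rw h (S n) (S x) false) (vhatn lam mul muh rw h (S n) x false))).
    intro x; reflexivity. exact (conc_A rw _ C).
Qed.

Lemma cv_ext (u w : nat -> R) l : (forall n, u n = w n) -> Un_cv u l -> Un_cv w l.
Proof. intros E H e He. destruct (H e He) as [N HN]. exists N. intros n Hn. rewrite <- E. auto. Qed.

Lemma h_pred (h : nat -> R) x : (forall x, h x <= h (S x)) -> h (pred x) <= h x.
Proof. intros Hm. destruct x; simpl. lra. apply Hm. Qed.

Lemma h_nonneg (h : nat -> R) x : h 0%nat = 0 -> (forall x, h x <= h (S x)) -> 0 <= h x.
Proof. intros H0 Hm. induction x. lra. pose proof (Hm x). lra. Qed.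

Lemma vhat_le_v lam mul muh rw c h n :
  0 < c -> 0 <= lam -> 0 <= mul -> mul < muh -> h 0%nat = 0 ->
  forall x i, vhatn lam mul muh rw h n x i <= vn lam mul muh rw c h n x i.
Proof.
  intros Hc Hl Hm Hmm H0. induction n as [|n IH].
  - intros; simpl; lra.
  - assert (F : forall x, step_adm lam mul muh rw h (vhatn lam mul muh rw h n) x false <=
             step_comb lam mul muh rw c h (vn lam mul muh rw c h n) x false).
    { intro x.
      rewrite step_adm_false, step_comb_false by auto.
      pose proof (mul_le lam _ _ Hl (IH x true)).
      pose proof (mul_le mul _ _ Hm (IH (pred x) false)).
      pose proof (mul_le (muh - mul) _ _ ltac:(lra) (IH x false)).
      pose proof (Rmax_l ((muh - mul) * vn lam mul muh rw c h n x false)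
                (- c + (muh - mul) * vn lam mul muh rw c h n (pred x) false)).
      lra. }
    intros x [|].
    + change (step_adm lam mul muh rw h (vhatn lam mul muh rw h n) x true <=
             step_comb lam mul muh rw c h (vn lam mul muh rw c h n) x true).
      rewrite step_adm_true, step_comb_true.
      pose proof (F x). pose proof (F (S x)).
      unfold Rmax; repeat destruct Rle_dec; lra.
    + apply F.
Qed.

Lemma vn_upper lam mul muh beta rw c h n :
  0 < c -> 0 <= lam -> 0 <= mul -> mul < muh -> 0 < beta -> lam + muh + beta = 1 -> 0 <= rw ->
  h 0%nat = 0 -> (forall x, h x <= h (S x)) ->
  forall x, vn lam mul muh rw c h n x false <= lam * rw / beta /\
            vn lam mul muh rw c h n x true <= rw + lam * rw / beta.
Proof.
  intros Hc Hl Hm Hmm Hb Hn Hr H0 Hmo. set (U := lam * rw / beta).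
  assert (HU : lam * rw + (lam + muh) * U = U) by (unfold U; replace (lam+muh) with (1 - beta) by lra; field; lra).
  assert (U0 : 0 <= U) by (unfold U; unfold Rdiv; apply Rmult_le_pos; [apply Rmult_le_pos; lra| left; apply Rinv_0_lt_compat; lra]).
  induction n as [|n IH].
  - intros; simpl; lra.
  - assert (F : forall x, step_comb lam mul muh rw c h (vn lam mul muh rw c h n) x false <= U).
    { intro x.
      rewrite step_comb_false by auto.
      pose proof (mul_le lam _ _ Hl (proj2 (IH x))).
      pose proof (mul_le mul _ _ Hm (proj1 (IH (pred x)))).
      pose proof (mul_le (muh - mul) _ _ ltac:(lra) (proj1 (IH x))).
      pose proof (mul_le (muh - mul) _ _ ltac:(lra) (proj1 (IH (pred x)))).
      pose proof (h_nonneg h x H0 Hmo).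
      assert (Rmax ((muh - mul) * vn lam mul muh rw c h n x false)
                (- c + (muh - mul) * vn lam mul muh rw c h n (pred x) false) <= (muh - mul) * U)
        by (apply Rmax_lub; lra).
      assert (lam * (rw + U) + mul * U + (muh - mul) * U = lam * rw + (lam + muh) * U) by ring.
      lra. }
    intro x. split; [apply F|].
    change (step_comb lam mul muh rw c h (vn lam mul muh rw c h n) x true <= rw + U).
    rewrite step_comb_true. pose proof (F x). pose proof (F (S x)).
    apply Rmax_lub; lra.
Qed.

Lemma vhatn_lower lam mul muh beta rw h n :
  0 <= lam -> 0 <= mul -> mul < muh -> 0 < beta -> lam + muh + beta = 1 ->
  h 0%nat = 0 -> (forall x, h x <= h (S x)) ->
  forall x, - h x / beta <= vhatn lam mul muh rw h n x false /\
            - h x / beta <= vhatn lam mul muh rw h n x true.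
Proof.
  intros Hl Hm Hmm Hb Hn H0 Hmo.
  assert (HL : forall x, - h x / beta <= 0).
  { intro x. pose proof (h_nonneg h x H0 Hmo). unfold Rdiv.
    assert (0 <= h x * / beta) by (apply Rmult_le_pos; auto; left; apply Rinv_0_lt_compat; lra).
    rewrite Ropp_mult_distr_l_reverse. lra. }
  induction n as [|n IH].
  - intros x; simpl. split; apply HL.
  - assert (F : forall x, - h x / beta <= step_adm lam mul muh rw h (vhatn lam mul muh rw h n) x false).
    { intro x.
      rewrite step_adm_false by auto.
      pose proof (mul_le lam _ _ Hl (proj2 (IH x))).
      pose proof (mul_le mul _ _ Hm (proj1 (IH (pred x)))).
      pose proof (mul_le (muh - mul) _ _ ltac:(lra) (proj1 (IH x))).
      assert (HP : - h x / beta <= - h (pred x) / beta).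
      { unfold Rdiv. apply Rmult_le_compat_r. left; apply Rinv_0_lt_compat; lra.
        pose proof (h_pred h x Hmo). lra. }
      pose proof (mul_le mul _ _ Hm HP).
      assert (E : - h x + lam * (- h x / beta) + mul * (- h x / beta) + (muh - mul) * (- h x / beta) = - h x / beta).
      { replace lam with (1 - beta - muh) by lra. field. lra. }
      lra. }
    intro x. split; [apply F|].
    change (- h x / beta <= step_adm lam mul muh rw h (vhatn lam mul muh rw h n) x true).
    rewrite step_adm_true. pose proof (F x).
    eapply Rle_trans; [|apply Rmax_r]. auto.
Qed.

Lemma mono_le (f : nat -> R) : (forall k, f k <= f (S k)) -> forall j k, (j <= k)%nat -> f j <= f k.
Proof. intros H j k Hjk. induction Hjk. lra. pose proof (H m). lra. Qed.

Lemma T_upper f th t k : is_T f th t -> f k <= th -> ext_le (Fin (Z.of_nat k)) t.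
Proof. intros [_ [H _]] Hk. auto. Qed.

Lemma T_mono f th t j : (forall k, f k <= f (S k)) -> is_T f th t ->
  ext_le (Fin (Z.of_nat j)) t -> f j <= th.
Proof.
  intros Hm [H1 [H2 H3]] Hj. destruct (Rle_dec (f j) th) as [|Hn]; auto. exfalso.
  assert (U : ext_le t (Fin (Z.of_nat j - 1))).
  { apply H3. simpl; lia. intros k Hk. simpl.
    destruct (le_lt_dec j k) as [Hjk|Hjk].
    - pose proof (mono_le f Hm j k Hjk). lra.
    - lia. }
  destruct t; simpl in *; lia.
Qed.

Lemma T_unique f th t t' : is_T f th t -> is_T f th t' -> t = t'.
Proof.
  intros [A1 [A2 A3]] [B1 [B2 B3]].
  pose proof (A3 t' B1 B2). pose proof (B3 t A1 A2).
  destruct t, t'; simpl in *; try tauto. f_equal; lia.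
Qed.

Lemma T_transfer f g th th' t : (forall k, f k <= th <-> g k <= th') -> is_T f th t -> is_T g th' t.
Proof.
  intros E [A1 [A2 A3]]. split; [auto|split].
  - intros k Hk. apply A2, E, Hk.
  - intros u Hu Hk. apply A3; auto. intros k Hk'. apply Hk, E, Hk'.
Qed.

Lemma argmax (e : nat -> R) m : exists x, (x <= m)%nat /\ forall y, (y <= m)%nat -> e y <= e x.
Proof.
  induction m as [|m [x [Hx H]]].
  - exists 0%nat. split; auto. intros y Hy. replace y with 0%nat by lia. lra.
  - destruct (Rle_dec (e x) (e (S m))).
    + exists (S m). split; auto. intros y Hy. destruct (Nat.eq_dec y (S m)). subst; lra.
      pose proof (H y ltac:(lia)). lra.
    + exists x. split. lia. intros y Hy. destruct (Nat.eq_dec y (S m)). subst; lra. apply H; lia.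
Qed.

Lemma finite_case lam mul muh beta (e eT : nat -> R) m :
  0 <= lam -> 0 <= mul -> mul < muh -> 0 < beta -> lam + muh + beta = 1 ->
  (forall x, 0 <= e x) ->
  (forall x, (x <= m)%nat -> e x = lam * eT x + mul * e (pred x) + (muh - mul) * e x) ->
  (forall x, (x < m)%nat -> eT x <= e (S x)) -> eT m <= e m ->
  forall x, (x <= m)%nat -> e x = 0.
Proof.
  intros Hl Hm Hmm Hb Hn He Eq A1 A2.
  destruct (argmax e m) as [z [Hz Hmax]].
  assert (T : eT z <= e z).
  { destruct (Nat.eq_dec z m). subst; auto. eapply Rle_trans. apply A1; lia. apply Hmax; lia. }
  assert (P : e (pred z) <= e z) by (apply Hmax; lia).
  pose proof (Eq z Hz). pose proof (mul_le lam _ _ Hl T). pose proof (mul_le mul _ _ Hm P).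
  assert (Z : e z <= 0).
  { replace beta with (1 - lam - muh) in Hb by lra. nra. }
  intros x Hx. pose proof (Hmax x Hx). pose proof (He x). lra.
Qed.

Lemma above_case lam mul muh beta e eT x :
  0 <= lam -> 0 <= mul -> mul < muh -> 0 < beta -> lam + muh + beta = 1 ->
  0 <= e x -> e x = lam * eT x + mul * e (pred x) + (muh - mul) * e x ->
  eT x <= e x -> e (pred x) = 0 -> e x = 0.
Proof.
  intros Hl Hm Hmm Hb Hn He Eq T P. rewrite P in Eq. pose proof (mul_le lam _ _ Hl T).
  replace beta with (1 - lam - muh) in Hb by lra. nra.
Qed.

Lemma pow_le1 q n : 0 <= q <= 1 -> q ^ n <= 1.
Proof. intros Hq. induction n; simpl. lra. pose proof (pow_le q n (proj1 Hq)). nra. Qed.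

Lemma infinite_case lam mul muh beta (e eT phi : nat -> R) K gamma J :
  0 < lam -> 0 <= mul -> mul < muh -> 0 < beta -> lam + muh + beta = 1 ->
  (forall x, 0 <= e x) ->
  (forall x, e x = lam * eT x + mul * e (pred x) + (muh - mul) * e x) ->
  (forall x, eT x <= e (S x)) ->
  0 <= K -> (forall x, e x <= K + phi x / beta) -> (forall x, 0 <= phi x) ->
  0 <= gamma -> gamma < 1 -> (0 < J)%nat ->
  (forall x, (lam + muh) ^ J * phi (x + J)%nat <= gamma * phi x) ->
  forall x, e x = 0.
Proof.
  intros Hl Hm Hmm Hb Hn He Eq T HK Hbd Hphi Hg0 Hg1 HJ HA.
  assert (Hq : 0 <= lam + muh <= 1) by lra.
  assert (St : forall y, 0 <= e y - e (pred y) -> (lam + beta) * e y <= lam * e (S y) /\ 0 <= e (S y) - e y).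
  { intros y Hy. pose proof (Eq y). pose proof (mul_le lam _ _ (Rlt_le _ _ Hl) (T y)).
    assert (0 <= mul * (e y - e (pred y))) by (apply Rmult_le_pos; auto).
    assert (0 <= beta * e y) by (apply Rmult_le_pos; auto; lra).
    assert (A : (lam + beta) * e y <= lam * e (S y)).
    { replace beta with (1 - lam - muh) in * by lra. nra. }
    split; auto. assert (0 <= lam * (e (S y) - e y)) by nra.
    apply (Rmult_le_reg_l lam); auto. lra. }
  assert (It : forall x m, (lam + muh) ^ (m * J) * phi (x + m * J)%nat <= phi x).
  { intros x m. induction m as [|m IH].
    - simpl. rewrite Nat.add_0_r. lra.
    - replace (S m * J)%nat with (J + m * J)%nat by (simpl; lia).
      replace (x + (J + m * J))%nat with ((x + m * J) + J)%nat by lia.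
      rewrite pow_add.
      pose proof (HA (x + m * J)%nat).
      pose proof (pow_le (lam + muh) (m * J) (proj1 Hq)).
      pose proof (Hphi (x + m * J)%nat).
      assert (gamma * phi (x + m * J)%nat <= phi (x + m * J)%nat) by nra.
      pose proof (mul_le _ _ _ H0 H).
      nra. }
  intro x. induction x as [x IH] using lt_wf_ind.
  destruct (Req_dec (e x) 0) as [|Hne]; auto. exfalso.
  set (a := e x). assert (Ha : 0 < a) by (pose proof (He x); unfold a in *; lra).
  assert (Q : forall n, 0 <= e (x + n)%nat - e (pred (x + n)) /\ (lam + beta) ^ n * a <= lam ^ n * e (x + n)%nat).
  { induction n as [|n [IH1 IH2]].
    - rewrite Nat.add_0_r. simpl. split; [|unfold a; lra].
      destruct x as [|x']; simpl. lra. rewrite (IH x') by lia. pose proof (He (S x')); lra.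
    - rewrite Nat.add_succ_r. destruct (St _ IH1) as [S1 S2]. split. simpl. lra.
      simpl. pose proof (pow_le lam n (Rlt_le _ _ Hl)).
      pose proof (mul_le _ _ _ H S1).
      assert (0 <= lam + beta) by lra.
      pose proof (mul_le _ _ _ H1 IH2). nra. }
  set (r := (lam + muh) * (lam + beta) / lam).
  assert (Hr : 1 < r).
  { unfold r. apply (Rmult_lt_reg_r lam); auto. unfold Rdiv. rewrite Rmult_assoc, Rinv_l by lra.
    replace beta with (1 - lam - muh) by lra. assert (0 < muh * (1 - lam - muh)) by (apply Rmult_lt_0_compat; lra). nra. }
  set (K' := K + phi x / beta).
  destruct (Pow_x_infinity r ltac:(rewrite Rabs_right; lra) (K' / a + 1)) as [N HN].
  set (n := (N * J)%nat).
  assert (Hn' : (n >= N)%nat) by (unfold n; nia).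
  specialize (HN n Hn'). rewrite Rabs_right in HN by (apply Rle_ge, pow_le; lra).
  destruct (Q n) as [_ Qn].
  pose proof (Hbd (x + n)%nat).
  pose proof (It x N). fold n in H0.
  pose proof (pow_le1 _ n Hq).
  pose proof (pow_le (lam + muh) n (proj1 Hq)).
  pose proof (pow_lt lam n Hl).
  assert (E1 : (lam + muh) ^ n * (lam + beta) ^ n = lam ^ n * r ^ n).
  { rewrite <- !Rpow_mult_distr. f_equal. unfold r. field. lra. }
  assert (E2 : (lam + muh) ^ n * ((lam + beta) ^ n * a) <= lam ^ n * K').
  { eapply Rle_trans. apply mul_le. auto. exact Qn.
    eapply Rle_trans. apply mul_le. auto. apply mul_le. apply pow_le; lra. exact H.
    unfold K'.
    assert (phi (x + n)%nat / beta * (lam + muh) ^ n <= phi x / beta).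
    { unfold Rdiv. rewrite Rmult_assoc, (Rmult_comm (/ beta)), <- Rmult_assoc.
      apply Rmult_le_compat_r. left; apply Rinv_0_lt_compat; lra. lra. }
    assert (K * (lam + muh) ^ n <= K) by nra.
    nra. }
  rewrite <- Rmult_assoc, E1, Rmult_assoc in E2.
  apply Rmult_le_reg_l in E2; auto.
  assert (K' / a * a = K') by (field; lra).
  nra.
Qed.

Lemma cv_succ_vn lam mul muh rw c h x i l :
  Un_cv (fun n => vn lam mul muh rw c h n x i) l -> Un_cv (fun n => vn lam mul muh rw c h (S n) x i) l.
Proof. apply (cv_succ (fun n => vn lam mul muh rw c h n x i)). Qed.
Lemma cv_succ_vhatn lam mul muh rw h x i l :
  Un_cv (fun n => vhatn lam mul muh rw h n x i) l -> Un_cv (fun n => vhatn lam mul muh rw h (S n) x i) l.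
Proof. apply (cv_succ (fun n => vhatn lam mul muh rw h n x i)). Qed.

Lemma cv_comb4 (A B C D : nat -> R) a b c d :
  Un_cv A a -> Un_cv B b -> Un_cv C c -> Un_cv D d ->
  Un_cv (fun n => A n + B n + C n + D n) (a + b + c + d).
Proof. intros. apply CV_plus; auto. apply CV_plus; auto. apply CV_plus; auto. Qed.

Theorem proposition2
  (lam mul muh beta rw c : R) (h : nat -> R)
  (Hlam : 0 < lam) (Hmul : 0 < mul) (Hmulh : mul < muh)
  (Hrw : 0 <= rw) (Hc : 0 < c) (Hbeta : 0 < beta)
  (Hnorm : lam + muh + beta = 1)
  (Hh0 : h 0%nat = 0)
  (Hmono : forall x : nat, h x <= h (S x))
  (Hconv : forall x : nat, h (S x) - h x <= h (S (S x)) - h (S x))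
  (* Assumption 1 (1) *)
  (HA1 : exists theta : R, 1 < theta /\
           forall x : nat, (0 < x)%nat -> h (S x) <= theta * h x)
  (* Assumption 1 (2) *)
  (HA2 : exists (gamma : R) (J : nat), 0 <= gamma /\ gamma < 1 /\ (0 < J)%nat /\
           forall x : nat,
             ((lam + muh) / (lam + muh + beta)) ^ J * (rw + c + h (x + J)%nat)
             <= gamma * (rw + c + h x))
  (* infinite-horizon values as pointwise limits *)
  (v vhat : nat -> bool -> R)
  (Hv : forall x i, Un_cv (fun n => vn lam mul muh rw c h n x i) (v x i))
  (Hvhat : forall x i, Un_cv (fun n => vhatn lam mul muh rw h n x i) (vhat x i))
  (* thresholds *)
  (Ts Bd Bdhat : ext)
  (HTs : is_T (fun k => v k false - v (S k) false) (c / (muh - mul)) Ts)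
  (HBd : is_T (fun k => v k false - v (S k) false) rw Bd)
  (HBdhat : is_T (fun k => vhat k false - vhat (S k) false) rw Bdhat)
  (* B^s = 1 + T_{Delta(.,0)}(c/delta) >= B^d + 1 *)
  (Hcond : ext_le (ext_add1 Bd) (ext_add1 Ts)) :
  Bdhat = Bd /\
  (forall (x : nat) (i : bool),
     ext_le (Fin (Z.of_nat x)) (ext_add1 Ts) -> v x i - vhat x i = 0).
Proof.
  assert (Hl0 : 0 <= lam) by lra. assert (Hm0 : 0 <= mul) by lra.
  assert (Cv : conc (fun x => v x false)).
  { split.
    - apply (lim_le (fun _ => 0) (fun n => vn lam mul muh rw c h n 0 false - vn lam mul muh rw c h n 1 false)).
      intro n. destruct (conc_vn lam mul muh rw c h n Hc Hl0 Hm0 Hmulh Hh0 Hmono Hconv) as [[A _] _]. exact A.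
      apply cv_const. apply CV_minus; apply Hv.
    - intro x. apply (lim_le (fun n => vn lam mul muh rw c h n x false - vn lam mul muh rw c h n (S x) false)
        (fun n => vn lam mul muh rw c h n (S x) false - vn lam mul muh rw c h n (S (S x)) false)).
      intro n. destruct (conc_vn lam mul muh rw c h n Hc Hl0 Hm0 Hmulh Hh0 Hmono Hconv) as [[_ B] _]. apply B.
      apply CV_minus; apply Hv. apply CV_minus; apply Hv. }
  assert (Cvh : conc (fun x => vhat x false)).
  { split.
    - apply (lim_le (fun _ => 0) (fun n => vhatn lam mul muh rw h n 0 false - vhatn lam mul muh rw h n 1 false)).
      intro n. destruct (conc_vhatn lam mul muh rw h n Hl0 Hm0 Hmulh Hh0 Hmono Hconv) as [[A _] _]. exact A.
      apply cv_const. apply CV_minus; apply Hvhat.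
    - intro x. apply (lim_le (fun n => vhatn lam mul muh rw h n x false - vhatn lam mul muh rw h n (S x) false)
        (fun n => vhatn lam mul muh rw h n (S x) false - vhatn lam mul muh rw h n (S (S x)) false)).
      intro n. destruct (conc_vhatn lam mul muh rw h n Hl0 Hm0 Hmulh Hh0 Hmono Hconv) as [[_ B] _]. apply B.
      apply CV_minus; apply Hvhat. apply CV_minus; apply Hvhat. }
  assert (Le : forall x i, vhat x i <= v x i).
  { intros x i. apply (lim_le (fun n => vhatn lam mul muh rw h n x i) (fun n => vn lam mul muh rw c h n x i)).
    intro n. apply vhat_le_v; auto. apply Hvhat. apply Hv. }
  assert (Up : forall x, v x false <= lam * rw / beta).
  { intro x. apply (lim_le (fun n => vn lam mul muh rw c h n x false) (fun _ => lam * rw / beta)).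
    intro n. apply (vn_upper lam mul muh beta rw c h n); auto. apply Hv. apply cv_const. }
  assert (Lo : forall x, - h x / beta <= vhat x false).
  { intro x. apply (lim_le (fun _ => - h x / beta) (fun n => vhatn lam mul muh rw h n x false)).
    intro n. apply (vhatn_lower lam mul muh beta rw h n); auto. apply cv_const. apply Hvhat. }
  assert (Bv : forall x, v x true = Rmax (rw + v (S x) false) (v x false)).
  { intro x. apply (UL_sequence (fun n => vn lam mul muh rw c h (S n) x true)). apply cv_succ_vn, Hv.
    apply (cv_ext (fun n => Rmax (rw + vn lam mul muh rw c h (S n) (S x) false) (vn lam mul muh rw c h (S n) x false))).
    intro n; reflexivity.
    apply cv_max. apply (CV_plus (fun _ => rw)). apply cv_const. apply cv_succ_vn, Hv. apply cv_succ_vn, Hv. }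
  assert (Bvh : forall x, vhat x true = Rmax (rw + vhat (S x) false) (vhat x false)).
  { intro x. apply (UL_sequence (fun n => vhatn lam mul muh rw h (S n) x true)). apply cv_succ_vhatn, Hvhat.
    apply (cv_ext (fun n => Rmax (rw + vhatn lam mul muh rw h (S n) (S x) false) (vhatn lam mul muh rw h (S n) x false))).
    intro n; reflexivity.
    apply cv_max. apply (CV_plus (fun _ => rw)). apply cv_const. apply cv_succ_vhatn, Hvhat. apply cv_succ_vhatn, Hvhat. }
  assert (Ev : forall x, v x false = - h x + lam * v x true + mul * v (pred x) false
             + Rmax ((muh - mul) * v x false) (- c + (muh - mul) * v (pred x) false)).
  { intro x. apply (UL_sequence (fun n => vn lam mul muh rw c h (S n) x false)). apply cv_succ_vn, Hv.
    apply (cv_ext (fun n => - h x + lam * vn lam mul muh rw c h n x true + mul * vn lam mul muh rw c h n (pred x) false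
             + Rmax ((muh - mul) * vn lam mul muh rw c h n x false) (- c + (muh - mul) * vn lam mul muh rw c h n (pred x) false))).
    intro n. symmetry. apply (step_comb_false lam mul muh rw c h (vn lam mul muh rw c h n) x Hc Hh0).
    apply (cv_comb4 (fun _ => - h x)). apply cv_const. apply cv_scal, Hv. apply cv_scal, Hv.
    apply cv_max. apply cv_scal, Hv. apply (CV_plus (fun _ => - c)). apply cv_const. apply cv_scal, Hv. }
  assert (Evh : forall x, vhat x false = - h x + lam * vhat x true + mul * vhat (pred x) false
             + (muh - mul) * vhat x false).
  { intro x. apply (UL_sequence (fun n => vhatn lam mul muh rw h (S n) x false)). apply cv_succ_vhatn, Hvhat.
    apply (cv_ext (fun n => - h x + lam * vhatn lam mul muh rw h n x true + mul * vhatn lam mul muh rw h n (pred x) false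
             + (muh - mul) * vhatn lam mul muh rw h n x false)).
    intro n. symmetry. apply (step_adm_false lam mul muh rw h (vhatn lam mul muh rw h n) x Hh0).
    apply (cv_comb4 (fun _ => - h x)). apply cv_const. apply cv_scal, Hvhat. apply cv_scal, Hvhat.
    apply cv_scal, Hvhat. }

  set (f := fun k => v k false - v (S k) false) in *.
  set (fh := fun k => vhat k false - vhat (S k) false) in *.
  assert (fmono : forall k, f k <= f (S k)) by (intro k; unfold f; apply (proj2 Cv)).
  assert (fhmono : forall k, fh k <= fh (S k)) by (intro k; unfold fh; apply (proj2 Cvh)).
  set (e := fun x => v x false - vhat x false).
  set (eT := fun x => v x true - vhat x true).
  assert (He : forall x, 0 <= e x) by (intro x; unfold e; pose proof (Le x false); lra).
  assert (HeT : forall x, 0 <= eT x) by (intro x; unfold eT; pose proof (Le x true); lra).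
  assert (Low : forall x, ext_le (Fin (Z.of_nat x)) (ext_add1 Ts) ->
     Rmax ((muh - mul) * v x false) (- c + (muh - mul) * v (pred x) false) = (muh - mul) * v x false).
  { intros [|y] Hy; simpl. apply Rmax_left; lra.
    assert (Hy' : ext_le (Fin (Z.of_nat y)) Ts) by (destruct Ts; simpl in *; lia).
    pose proof (T_mono f _ _ y fmono HTs Hy') as Fy. unfold f in Fy.
    assert (D : (muh - mul) * (v y false - v (S y) false) <= c).
    { apply (Rmult_le_compat_l (muh - mul)) in Fy; [|lra].
      replace ((muh - mul) * (c / (muh - mul))) with c in Fy by (field; lra). exact Fy. }
    apply Rmax_left. lra. }
  assert (EqE : forall x, ext_le (Fin (Z.of_nat x)) (ext_add1 Ts) ->
     e x = lam * eT x + mul * e (pred x) + (muh - mul) * e x).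
  { intros x Hx. pose proof (Ev x) as A. rewrite (Low x Hx) in A. pose proof (Evh x) as B.
    unfold e, eT. lra. }
  assert (AdmYes : forall x, f x <= rw -> eT x <= e (S x)).
  { intros x Hx. unfold eT, e. rewrite (Bv x), (Bvh x). unfold f in Hx.
    rewrite Rmax_left by lra. pose proof (Rmax_l (rw + vhat (S x) false) (vhat x false)). lra. }
  assert (AdmNo : forall x, ~ f x <= rw -> eT x <= e x).
  { intros x Hx. unfold eT, e. rewrite (Bv x), (Bvh x). unfold f in Hx.
    rewrite Rmax_right by lra. pose proof (Rmax_r (rw + vhat (S x) false) (vhat x false)). lra. }
  destruct Bd as [d|].
  -
    destruct HBd as [Hd1 [Hd2 Hd3]] eqn:HBdE. simpl in Hd1.
    set (m := Z.to_nat (d + 1)).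
    assert (Hm : Z.of_nat m = (d + 1)%Z) by (unfold m; lia).
    assert (InB : forall x, (x <= m)%nat -> ext_le (Fin (Z.of_nat x)) (ext_add1 Ts)).
    { intros x Hx. simpl in Hcond. destruct Ts; simpl in *; lia. }
    assert (fle : forall k, (k < m)%nat -> f k <= rw).
    { intros k Hk. apply (T_mono f rw (Fin d) k fmono HBd). simpl. lia. }
    assert (fgt : forall k, (m <= k)%nat -> ~ f k <= rw).
    { intros k Hk Hf. pose proof (T_upper _ _ _ _ HBd Hf). simpl in H. lia. }
    assert (Zero1 : forall x, (x <= m)%nat -> e x = 0).
    { apply (finite_case lam mul muh beta e eT m); try lra.
      - exact He.
      - intros x Hx. apply EqE, InB, Hx.
      - intros x Hx. apply AdmYes, fle, Hx.
      - apply AdmNo, fgt. lia. }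
    assert (Zero : forall x, ext_le (Fin (Z.of_nat x)) (ext_add1 Ts) -> e x = 0).
    { induction x as [|y IH]; intro Hx.
      - apply Zero1. lia.
      - destruct (le_lt_dec (S y) m) as [Hy|Hy]. apply Zero1; auto.
        apply (above_case lam mul muh beta e eT (S y)); auto.
        apply AdmNo, fgt. lia. simpl. apply IH. destruct Ts; simpl in *; lia. }
    assert (ZeroT : forall x, ext_le (Fin (Z.of_nat x)) (ext_add1 Ts) -> eT x = 0).
    { intros x Hx. pose proof (HeT x). destruct (le_lt_dec m x) as [Hxm|Hxm].
      - pose proof (AdmNo x (fgt x Hxm)). rewrite (Zero x Hx) in H0. lra.
      - pose proof (AdmYes x (fle x Hxm)). rewrite (Zero (S x) (InB (S x) Hxm)) in H0. lra. }
    split.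
    + symmetry. apply (T_unique fh rw). 2: exact HBdhat.
      apply (T_transfer f fh rw rw); [|exact HBd].
      intro k. destruct (le_lt_dec m k) as [Hk|Hk].
      * split; intro H; exfalso.
        -- exact (fgt k Hk H).
        -- assert (fh m >= f m).
           { unfold fh, f. pose proof (Zero1 m (le_n m)). pose proof (He (S m)). unfold e in *. lra. }
           pose proof (mono_le fh fhmono m k Hk). pose proof (fgt m (le_n m)). lra.
      * assert (f k = fh k).
        { unfold f, fh. pose proof (Zero1 k ltac:(lia)). pose proof (Zero1 (S k) Hk). unfold e in *. lra. }
        rewrite H. tauto.
    + intros x [|] Hx. apply ZeroT; auto. apply Zero; auto.
  -
    assert (TsI : Ts = PInf) by (destruct Ts; simpl in Hcond; tauto). subst Ts.
    assert (fle : forall k, f k <= rw) by (intro k; apply (T_mono f rw PInf k fmono HBd); simpl; auto).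
    destruct HA2 as [gamma [J [Hg0 [Hg1 [HJ HA]]]]].
    assert (Zero : forall x, e x = 0).
    { apply (infinite_case lam mul muh beta e eT (fun x => rw + c + h x) (lam * rw / beta) gamma J); try lra; try exact He; try exact HJ.
      - intro x. apply EqE. simpl; auto.
      - intro x. apply AdmYes, fle.
      - unfold Rdiv. apply Rmult_le_pos. nra. left; apply Rinv_0_lt_compat; lra.
      - intro x. unfold e. pose proof (Up x). pose proof (Lo x).
        assert (h x / beta <= (rw + c + h x) / beta).
        { unfold Rdiv. apply Rmult_le_compat_r. left; apply Rinv_0_lt_compat; lra. lra. }
        unfold Rdiv in *. lra.
      - intro x. pose proof (h_nonneg h x Hh0 Hmono). lra.
      - intro x. specialize (HA x). rewrite Hnorm in HA. rewrite Rdiv_1_r in HA. exact HA. }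
    split.
    + symmetry. apply (T_unique fh rw). 2: exact HBdhat.
      apply (T_transfer f fh rw rw); [|exact HBd].
      intro k. assert (f k = fh k).
      { unfold f, fh. pose proof (Zero k). pose proof (Zero (S k)). unfold e in *. lra. }
      rewrite H. tauto.
    + intros x [|] Hx.
      * pose proof (AdmYes x (fle x)). rewrite (Zero (S x)) in H. pose proof (HeT x). unfold eT in *. lra.
      * apply Zero.
Qed.
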